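(* Let the setting be as in the context and suppose that $F_c$ satisfies $\lim_{n\to\infty} n\,\bar F_c(\tau_{F_c}-\xi/\sqrt n)=\infty$ for every $\xi>0$. Then $\tau_H=\tau_{F_c}<\infty$ and $\sqrt n\,(\tau_H-t_{(n)})\to 0$ in probability as $n\to\infty$, where $t_{(n)}=\max_{1\le i\le n}Y_i$.
   Context: $T\in[0,\infty]$ and $C\ge0$ are independent; $T$ has improper distribution function $F(t)=\mathbb P(T\le t)=pF_0(t)$ with $0<p<1$ and $F_0$ a proper distribution function, and $C$ has distribution function $F_c$. $Y=\min(T,C)$ has distribution function $H$ with $1-H=(1-F)(1-F_c)$. For a distribution function $G$, $\bar G=1-G$ and $\tau_G=\sup\{t\ge0:G(t)<1\}$. $Y_1,\dots,Y_n$ are i.i.d. copies of $Y$. *)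

(* Defs.v *)
From HB Require Import structures.
From mathcomp Require Import all_boot all_order all_algebra.
From mathcomp Require Import all_classical all_reals all_analysis measurable_realfun.
Set Implicit Arguments. Unset Strict Implicit. Unset Printing Implicit Defensive.
Import Order.TTheory GRing.Theory Num.Theory.
Import numFieldNormedType.Exports.
Local Open Scope classical_set_scope.
Local Open Scope ring_scope.

Definition distr_fun (R : realType) (d : measure_display) (O : measurableType d)
  (P : probability O R) (X : O -> R) (t : R) : R :=
  fine (P [set w | X w <= t]).

(* (possibly improper) distribution function of an extended-real r.v.:
   t |-> P(X <= t), t real *)
Definition distr_funE (R : realType) (d : measure_display) (O : measurableType d)
  (P : probability O R) (X : O -> \bar R) (t : R) : R :=
  fine (P [set w | (X w <= t%:E)%E]).

Definition proper_distribution_function (R : realType) (G : R -> R) : Prop :=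
  [/\ {homo G : x y / x <= y},
      (forall x, G y @[y --> x^'+] --> G x),
      (G x @[x --> -oo] --> (0:R)) &
      (G x @[x --> +oo] --> (1:R))].

(* tau_G = sup {t >= 0 : G t < 1}, in [0, +oo]; (sup of the empty subset
   of [0,oo) taken to be 0) *)
Definition tau (R : realType) (G : R -> R) : \bar R :=
  ereal_sup ([set 0%E] `|` [set t%:E | t in [set t | 0 <= t /\ G t < 1]]).

Definition survE (R : realType) (G : R -> R) (x : \bar R) : R :=
  match x with
  | r%:E => 1 - G r
  | +oo%E => 0
  | -oo%E => 1
  end.

Definition indep2 (R : realType) (d : measure_display) (O : measurableType d)
  (P : probability O R) (d1 d2 : measure_display)
  (T1 : measurableType d1) (T2 : measurableType d2)
  (X1 : O -> T1) (X2 : O -> T2) : Prop :=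
  forall (A : set T1) (B : set T2), measurable A -> measurable B ->
    P (X1 @^-1` A `&` X2 @^-1` B) = (P (X1 @^-1` A) * P (X2 @^-1` B))%E.

Definition mutually_independent (R : realType) (d : measure_display)
  (O : measurableType d) (P : probability O R) (X : nat -> O -> R) : Prop :=
  forall (I : seq nat) (B : nat -> set R), uniq I ->
    (forall i, measurable (B i)) ->
    P (\bigcap_(i in [set j | j \in I]) (X i @^-1` B i)) =
    (\prod_(i <- I) P (X i @^-1` B i))%E.

(* Main.v *)
Require Import Defs.
From HB Require Import structures.
From mathcomp Require Import all_boot all_order all_algebra.
From mathcomp Require Import all_classical all_reals all_analysis measurable_realfun.
From mathcomp Require Import ring lra.
Import Order.TTheory GRing.Theory Num.Theory.
Import numFieldNormedType.Exports.
Local Open Scope classical_set_scope.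
Local Open Scope ring_scope.
Section pr.
Context (R : realType) d (O : measurableType d) (P : probability O R).

Lemma pr_fin {A : set O} : measurable A -> P A = (fine (P A))%:E.
Proof. move=> mA; rewrite fineK //; exact: fin_num_measure. Qed.

Lemma pr_ge0 (A : set O) : 0 <= fine (P A).
Proof. exact: fine_ge0. Qed.

Lemma pr_le1 {A : set O} : measurable A -> fine (P A) <= 1.
Proof.
move=> mA; have := probability_le1 P mA; rewrite (pr_fin mA) lee_fin //.
Qed.

Lemma pr_C {A : set O} : measurable A -> fine (P (~` A)) = 1 - fine (P A).
Proof.
move=> mA; rewrite probability_setC // (pr_fin mA) -EFinB //.
Qed.
End pr.
Lemma df_le1 (R : realType) (F0 : R -> R) :
  proper_distribution_function F0 -> forall t, F0 t <= 1.
Proof.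
case=> homo _ _ lim1 t; rewrite leNgt; apply/negP => h.
have H1 : \forall x \near +oo, F0 x < F0 t by exact: (cvgr_lt _ lim1 _ h).
have H2 := nbhs_pinfty_ge (num_real t).
have [x [Hx1 Hx2]] := filter_ex (filterI H1 H2).
by have := homo _ _ Hx2; rewrite leNgt Hx1.
Qed.

Lemma Ymin (R : realType) (x : \bar R) (c t : R) : (0 <= x)%E ->
  (t < fine (Order.min x c%:E)) = ((t%:E < x)%E && (t < c)).
Proof.
case: x => [r| |] //= _.
  by rewrite -EFin_min /= lt_min.
by rewrite ltry.
Qed.

Lemma bigmax_ltP (R : realType) (x0 c : R) n (f : nat -> R) :
  (\big[Num.max/x0]_(i < n) f i < c) <-> (x0 < c /\ forall i, (i < n)%N -> f i < c).
Proof.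
elim: n f => [|n IH] f.
  by rewrite big_ord0; split => [h|[]//]; split => // i.
rewrite big_ord_recl /= gt_max; split.
  case/andP => h3 /(IH (fun i => f i.+1)) [h1 h2]; split => //; case => // i.
case=> h1 h2; apply/andP; split; first exact: h2.
by apply/(IH (fun i => f i.+1)); split => // i hi; apply: h2.
Qed.

Lemma bigmax_leP (R : realType) (x0 c : R) n (f : nat -> R) :
  (\big[Num.max/x0]_(i < n) f i <= c) <-> (x0 <= c /\ forall i, (i < n)%N -> f i <= c).
Proof.
elim: n f => [|n IH] f.
  by rewrite big_ord0; split => [h|[]//]; split => // i.
rewrite big_ord_recl /= ge_max; split.
  case/andP => h3 /(IH (fun i => f i.+1)) [h1 h2]; split => //; case => // i.
case=> h1 h2; apply/andP; split; first exact: h2.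
by apply/(IH (fun i => f i.+1)); split => // i hi; apply: h2.
Qed.

Lemma bern (R : realType) (a : R) n : 0 <= a <= 1 ->
  (1 - a) ^+ n * (1 + n%:R * a) <= 1.
Proof.
case/andP => a0 a1; elim: n => [|n IH]; first by rewrite expr0 mul0r addr0 mulr1.
rewrite exprSr -mulrA.
have h0 : 0 <= (1 - a) ^+ n by apply: exprn_ge0; lra.
have : (1 - a) * (1 + n.+1%:R * a) <= 1 + n%:R * a.
  rewrite -natr1; have n0 : 0 <= n%:R :> R by [].
  nra.
move=> h; apply: le_trans IH; exact: ler_wpM2l.
Qed.

Lemma prod_cst (R : realType) (a : R) n :
  (\prod_(i <- iota 0 n) a%:E)%E = (a ^+ n)%:E.
Proof.
elim: n => [|n IH]; first by rewrite big_nil expr0.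
by rewrite -addn1 iotaD big_cat /= IH big_cons big_nil mule1 -EFinM exprD expr1.
Qed.

Lemma absalg (R : realType) (s eps t M : R) : 0 < s ->
  (eps < `|s * (t - M)|) <-> (M < t - eps / s \/ t + eps / s < M).
Proof.
move=> s0; have e : eps = (eps / s) * s by rewrite divfK // gt_eqF.
set δ := eps / s; rewrite e ltr_normr -mulrN ![δ * s]mulrC !ltr_pM2l //; split.
  case/orP => h; [left|right]; lra.
by case=> h; apply/orP; [left|right]; lra.
Qed.

Theorem mainTheorem2 (R : realType)
  (d : measure_display) (Omega : measurableType d) (mu : probability Omega R)
  (T : Omega -> \bar R) (C : Omega -> R) (p : R) (F0 : R -> R)
  (d' : measure_display) (Omega' : measurableType d') (Q : probability Omega' R)
  (Ys : nat -> Omega' -> R) :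
  measurable_fun setT T -> (forall w, (0 <= T w)%E) ->
  measurable_fun setT C -> (forall w, 0 <= C w) ->
  indep2 mu T C ->
  0 < p < 1 -> proper_distribution_function F0 ->
  (forall t, distr_funE mu T t = p * F0 t) ->
  let Y := fun w => fine (Order.min (T w) (C w)%:E) in
  (forall i, measurable_fun setT (Ys i)) ->
  mutually_independent Q Ys ->
  (forall i (B : set R), measurable B -> Q (Ys i @^-1` B) = mu (Y @^-1` B)) ->
  let Fc := distr_fun mu C in
  let H := distr_fun mu Y in
  (forall xi : R, 0 < xi ->
     ((n%:R * survE Fc (tau Fc - (xi / Num.sqrt n%:R)%:E))%:E)%E
       @[n --> \oo] --> +oo%E) ->
  tau H = tau Fc /\ (tau Fc < +oo)%E /\
  (forall eps : R, 0 < eps ->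
     Q [set w | eps < `| Num.sqrt n%:R *
                   (fine (tau H) - \big[Num.max/Ys 0%N w]_(i < n) Ys i w) | ]
       @[n --> \oo] --> 0%E).
Proof.
move=> mT T0 mC C0 ind /andP[p0 p1] pdf hF Y mYs indQ lawY Fc H hyp.
set F := distr_funE mu T.
have mY : measurable_fun setT Y.
  apply: measurableT_comp; first exact: fine_measurable.
  apply: measurable_mine => //; exact/measurable_EFinP.
have mgtR : forall t : R, measurable [set x : R | t < x].
  move=> t; rewrite (_ : [set x | t < x] = `]t, +oo[%classic); first exact: measurable_itv.
  by apply/seteqP; split => x /=; rewrite in_itv /= andbT.
have mgtE : forall t : R, measurable [set x : \bar R | (t%:E < x)%E].
  move=> t; rewrite (_ : [set x | (t%:E < x)%E] = [set` Interval (BRight t%:E) (BInfty _ false)]); first exact: emeasurable_itv.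
  by apply/seteqP; split => x /=; rewrite in_itv /= andbT.
have pre : forall (f : Omega -> R) (B : set R), measurable_fun setT f -> measurable B -> measurable (f @^-1` B).
  by move=> f B mf mB; have := mf measurableT _ mB; rewrite setTI.
have preE : forall (B : set (\bar R)), measurable B -> measurable (T @^-1` B).
  by move=> B mB; have := mT measurableT _ mB; rewrite setTI.
have key : forall t, 1 - H t = (1 - F t) * (1 - Fc t).
  move=> t.
  have e1 : [set w | Y w <= t] = ~` (Y @^-1` [set x | t < x]).
    by apply/seteqP; split => w /=; rewrite ltNge => h; [exact/negP/negPn | exact/negPn/negP].
  have e2 : [set w | (T w <= t%:E)%E] = ~` (T @^-1` [set x | (t%:E < x)%E]).
    by apply/seteqP; split => w /=; rewrite ltNge => h; [exact/negP/negPn | exact/negPn/negP].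
  have e3 : [set w | C w <= t] = ~` (C @^-1` [set x | t < x]).
    by apply/seteqP; split => w /=; rewrite ltNge => h; [exact/negP/negPn | exact/negPn/negP].
  have e4 : Y @^-1` [set x | t < x] = T @^-1` [set x | (t%:E < x)%E] `&` C @^-1` [set x | t < x].
    by apply/seteqP; split => w /=; rewrite /Y Ymin // => /andP.
  rewrite /H /F /Fc /distr_fun /distr_funE e1 e2 e3 (@pr_C _ _ _ mu _ (pre _ _ mY (mgtR t))) (@pr_C _ _ _ mu _ (preE _ (mgtE t))) (@pr_C _ _ _ mu _ (pre _ _ mC (mgtR t))).
  have sk : forall x : R, 1 - (1 - x) = x by move=> x; lra.
  rewrite !sk e4 (ind _ _ (mgtE t) (mgtR t)) fineM //.
  - exact: (fin_num_measure mu _ (preE _ (mgtE t))).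
  - exact: (fin_num_measure mu _ (pre _ _ mC (mgtR t))).
have mleR : forall t : R, measurable [set x : R | x <= t].
  move=> t; rewrite (_ : [set x | x <= t] = `]-oo, t]%classic); first exact: measurable_itv.
  by apply/seteqP; split => x /=; rewrite in_itv /=.
have mltR : forall t : R, measurable [set x : R | x < t].
  move=> t; rewrite (_ : [set x | x < t] = `]-oo, t[%classic); first exact: measurable_itv.
  by apply/seteqP; split => x /=; rewrite in_itv /=.
have hF1 : forall t, 1 - p <= 1 - F t.
  move=> t; rewrite /F hF; have := @df_le1 _ _ pdf t => h.
  have : 0 <= p * (1 - F0 t) by apply: mulr_ge0; lra.
  rewrite mulrBr mulr1; lra.
have Fcle : forall t, Fc t <= 1.
  by move=> t; rewrite /Fc /distr_fun; exact: (@pr_le1 _ _ _ mu _ (pre _ _ mC (mleR t))).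
have hH : forall t, (1 - p) * (1 - Fc t) <= 1 - H t.
  move=> t; rewrite key; apply: ler_wpM2r; last exact: hF1.
  by have := Fcle t; lra.
have eqlt : forall t, (H t < 1) = (Fc t < 1).
  move=> t; rewrite -[H t < 1]subr_gt0 -[Fc t < 1]subr_gt0 key pmulr_rgt0 //.
  by apply: lt_le_trans (hF1 t); rewrite subr_gt0.
have tauHF : tau H = tau Fc.
  rewrite /tau; congr ereal_sup; congr setU; apply/seteqP; split => x /= [y [y0 hy] <-]; exists y => //.
    by rewrite -eqlt.
  by rewrite eqlt.
have tau0 : (0 <= tau Fc)%E by apply: ereal_sup_ubound; left.
have [τ Eτ] : exists τ, tau Fc = τ%:E.
  case E: (tau Fc) => [r| |]; first by exists r.
  - exfalso; have := hyp 1 ltr01; rewrite E => /cvgeryP/cvgryPge/(_ 1) h.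
    have [n hn] := filter_ex h.
    by move: hn => /=; rewrite mulr0 ler10.
  - by rewrite E in tau0.
have τ0 : 0 <= τ by rewrite -lee_fin -Eτ.
have Fcτ : forall δ, 0 < δ -> Fc (τ + δ) = 1.
  move=> δ δ0; apply/eqP; rewrite eq_le Fcle /= leNgt; apply/negP => h.
  have : ((τ + δ)%:E <= tau Fc)%E.
    by apply: ereal_sup_ubound; right; exists (τ + δ) => //; split => //; lra.
  rewrite Eτ lee_fin; lra.
split; first exact: tauHF.
split; first by rewrite Eτ ltry.
rewrite tauHF Eτ /= => eps e0.
have hx := hyp eps e0; rewrite Eτ in hx; move/cvgeryP in hx.
set x := fun n : nat => n%:R * survE Fc (τ%:E - (eps / Num.sqrt n%:R)%:E) in hx.
set E := fun n : nat => [set w | eps < `|Num.sqrt n%:R * (τ - \big[Num.max/Ys 0%N w]_(i < n) Ys i w)|].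
have preQ : forall i B, measurable B -> measurable (Ys i @^-1` B).
  by move=> i B mB; have := mYs i measurableT _ mB; rewrite setTI.
have keyn : \forall n \near \oo, (Q (E n) \is a fin_num) /\ fine (Q (E n)) <= 1 / (1 + (1 - p) * x n).
  near=> n.
  have n1 : (1 <= n)%N by near: n; exact: nbhs_infty_ge.
  have s0 : (0 : R) < Num.sqrt n%:R by rewrite sqrtr_gt0 ltr0n.
  set c1 := τ - eps / Num.sqrt n%:R.
  set c2 := τ + eps / Num.sqrt n%:R.
  set D := [set j : nat | j \in iota 0 n].
  set Lo := \bigcap_(i in D) (Ys i @^-1` [set y | y < c1]).
  set Hi := \bigcap_(i in D) (Ys i @^-1` [set y | y <= c2]).
  have mLo : measurable Lo.
    apply: fin_bigcap_measurable; first exact: finite_seq.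
    by move=> i _; apply: preQ; exact: mltR.
  have mHi : measurable Hi.
    apply: fin_bigcap_measurable; first exact: finite_seq.
    by move=> i _; apply: preQ; exact: mleR.
  have D0 : D 0%N by rewrite /D /= mem_iota.
  have Di : forall i, D i <-> (i < n)%N by move=> i; rewrite /D /= mem_iota.
  have hE : E n = Lo `|` ~` Hi.
    apply/seteqP; split => w /=.
    - move/absalg => /(_ s0) [h|h].
        left => i /Di hi; move/(@bigmax_ltP R _ _ n (fun i => Ys i w)): h => [_ h]; exact: h.
      right => hHi; have : \big[Num.max/Ys 0%N w]_(i < n) Ys i w <= c2.
        by apply/(@bigmax_leP R _ _ n (fun i => Ys i w)); split; [exact: hHi | move=> i /Di; exact: hHi].
      rewrite /c2; lra.
    - move=> h; apply/absalg => //; case: h => [hL|hHi]; [left|right].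
        by apply/(@bigmax_ltP R _ _ n (fun i => Ys i w)); split; [exact: hL | move=> i /Di; exact: hL].
      rewrite ltNge; apply/negP => hM; apply: hHi => i /Di hi.
      by move/(@bigmax_leP R _ _ n (fun i => Ys i w)): hM => [_ h]; exact: h.
  have QLo : Q Lo = ((fine (mu (Y @^-1` [set y | y < c1]))) ^+ n)%:E.
    rewrite /Lo (indQ (iota 0 n) (fun _ => [set y | y < c1]) (iota_uniq 0 n) (fun _ => mltR c1)).
    under eq_bigr => i _ do rewrite (lawY i _ (mltR c1)).
    by rewrite (@pr_fin _ _ _ mu _ (pre _ _ mY (mltR c1))) prod_cst.
  have Hc2 : mu (Y @^-1` [set y | y <= c2]) = 1%E.
    have : 1 - H c2 = 0 by rewrite key /c2 Fcτ ?subrr ?mulr0 //; apply: divr_gt0.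
    rewrite (@pr_fin _ _ _ mu _ (pre _ _ mY (mleR c2))) => h.
    by congr EFin; rewrite /H /distr_fun in h; lra.
  have QHi : Q Hi = 1%E.
    rewrite /Hi (indQ (iota 0 n) (fun _ => [set y | y <= c2]) (iota_uniq 0 n) (fun _ => mleR c2)).
    under eq_bigr => i _ do rewrite (lawY i _ (mleR c2)).
    by rewrite Hc2 prod_cst expr1n.
  have mE : measurable (E n) by rewrite hE; exact: measurableU mLo (measurableC mHi).
  have QE : (Q (E n) <= Q Lo)%E.
    have hU : (Q (Lo `|` ~` Hi) <= Q Lo + Q (~` Hi))%E.
      exact: measureU2 mLo (measurableC mHi).
    have hc : Q (~` Hi) = 0%E by rewrite probability_setC // QHi subee.
    by rewrite hE; rewrite hc adde0 in hU.
  split; first exact: fin_num_measure.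
  have finLo : Q Lo \is a fin_num by rewrite QLo.
  have h1 := fine_le (fin_num_measure Q _ mE) finLo QE.
  rewrite QLo /= in h1.
  set h0 := fine (mu (Y @^-1` [set y | y < c1])) in h1.
  have h00 : 0 <= h0 by exact: fine_ge0 (measure_ge0 _ _).
  have hle : h0 <= H c1.
    rewrite /H /distr_fun; apply: fine_le.
    - exact: (fin_num_measure mu _ (pre _ _ mY (mltR c1))).
    - exact: (fin_num_measure mu _ (pre _ _ mY (mleR c1))).
    - apply: le_measure.
      + by rewrite inE; exact: (pre _ _ mY (mltR c1)).
      + by rewrite inE; exact: (pre _ _ mY (mleR c1)).
      + by move=> w /= /ltW.
  have hHc1 := hH c1.
  set a := (1 - p) * (1 - Fc c1) in hHc1 *.
  have a0 : 0 <= a by apply: mulr_ge0; [lra | have := Fcle c1; lra].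
  have a1 : a <= 1 by lra.
  have hpow : h0 ^+ n <= (1 - a) ^+ n.
    by apply: lerXn2r; rewrite ?nnegrE //; lra.
  have hb := @bern _ a n (introT andP (conj a0 a1)).
  have sx : survE Fc (τ%:E - (eps / Num.sqrt n%:R)%:E) = 1 - Fc c1 by [].
  have xa : n%:R * a = (1 - p) * x n by rewrite /x sx /a; ring.
  rewrite -xa; apply: (le_trans h1); apply: (le_trans hpow).
  have na : 0 <= n%:R * a by apply: mulr_ge0.
  by rewrite ler_pdivlMr; [lra | lra].
apply: cvg_EFin.
  by near=> n; have [] : Q (E n) \is a fin_num /\ fine (Q (E n)) <= 1 / (1 + (1 - p) * x n) by near: n; exact: keyn.
apply/cvgrPdist_lt => e e0'.
have hA := (proj1 (cvgryPge _) hx) (1 / ((1 - p) * e)).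
have c0 : 0 < (1 - p) * e by apply: mulr_gt0 => //; lra.
near=> n.
have [fn bn] : Q (E n) \is a fin_num /\ fine (Q (E n)) <= 1 / (1 + (1 - p) * x n) by near: n; exact: keyn.
have xA : 1 / ((1 - p) * e) <= x n by near: n; exact: hA.
rewrite ler_pdivrMr // in xA.
rewrite sub0r normrN ger0_norm; last exact: fine_ge0 (measure_ge0 _ _).
apply: (le_lt_trans bn).
have xpos : 0 < 1 + (1 - p) * x n.
  have : 0 <= x n * ((1 - p) * e) by lra.
  rewrite pmulr_lge0 // => ?; have : 0 <= (1 - p) * x n by apply: mulr_ge0 => //; lra.
  lra.
rewrite ltr_pdivrMr //; nra.
Unshelve. all: by end_near.
Qed.
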